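(* Let $G$ be a connected graph. Then: (i) $\mu_t(G)\ge|\mathcal{S}(G)|$; (ii) if $\mu_t(G)=|\mathcal{S}(G)|$, then $\mu_t(G)=n(G)-|\mathcal{P}(G)|$; (iii) if $\mu_t(G)=n(G)-|\mathcal{P}(G)|$, then $\mu_t(G)=|\mathcal{C}(G)|$.
   Context: All graphs are finite, simple and undirected; $n(G)$ denotes the order of $G$ and $N_G[v]$ the closed neighborhood of $v$. Let $G$ be a connected graph and $X\subseteq V(G)$. Two vertices $x,y\in V(G)$ are $X$-visible if there exists a shortest $x,y$-path in $G$ none of whose internal vertices (i.e., vertices other than $x$ and $y$) belongs to $X$. The set $X$ is a total mutual-visibility set of $G$ if every two vertices of $G$ are $X$-visible (the empty set is allowed). The total mutual-visibility number $\mu_t(G)$ is the maximum cardinality of a total mutual-visibility set of $G$; a $\mu_t(G)$-set is a total mutual-visibility set of cardinality $\mu_t(G)$. $\mathcal{C}(G)$ is the set of vertices belonging to every $\mu_t(G)$-set. A vertex is simplicial if its neighbors induce a complete graph; $\mathcal{S}(G)$ is the set of simplicial vertices of $G$. $\mathcal{P}(G)$ is the set of vertices $v$ for which there exist two distinct vertices $u,w\in V(G)$ with $N_G[u]\cap N_G[w]=\{v\}$ (equivalently, $v$ is the middle vertex of a convex, i.e. geodesically closed, induced path $P_3$). *)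

(* Defs.v *)
From mathcomp Require Import all_boot.
From mathcomp Require Import boolp.
Set Implicit Arguments. Unset Strict Implicit. Unset Printing Implicit Defensive.

Definition simple_graph (T : finType) (e : rel T) : Prop :=
  symmetric e /\ irreflexive e.

Definition connected_graph (T : finType) (e : rel T) : Prop :=
  forall x y : T, connect e x y.

(* A walk from x to y: the sequence of vertices after x, ending at y; its
   length is size p. *)
Definition walk (T : finType) (e : rel T) (x y : T) (p : seq T) : Prop :=
  path e x p /\ last x p = y.

Definition shortest_path (T : finType) (e : rel T) (x y : T) (p : seq T) : Prop :=
  walk e x y p /\ forall q, walk e x y q -> size p <= size q.

Definition internal (T : finType) (p : seq T) : seq T := take (size p).-1 p.

Definition visible (T : finType) (e : rel T) (X : {set T}) (x y : T) : Prop :=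
  exists p, shortest_path e x y p /\ forall v, v \in internal p -> v \notin X.

Definition total_mv_set (T : finType) (e : rel T) (X : {set T}) : Prop :=
  forall x y : T, visible e X x y.

Definition mu_t_set (T : finType) (e : rel T) (X : {set T}) : Prop :=
  total_mv_set e X /\ forall Y : {set T}, total_mv_set e Y -> #|Y| <= #|X|.

Definition is_mu_t (T : finType) (e : rel T) (m : nat) : Prop :=
  (exists X : {set T}, total_mv_set e X /\ #|X| = m) /\
  forall X : {set T}, total_mv_set e X -> #|X| <= m.

Definition closed_nbhd (T : finType) (e : rel T) (v : T) : {set T} :=
  [set u | (u == v) || e v u].

Definition simplicial (T : finType) (e : rel T) (v : T) : bool :=
  [forall u, forall w, (e v u && e v w && (u != w)) ==> e u w].

Definition S_set (T : finType) (e : rel T) : {set T} := [set v | simplicial e v].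

Definition P_set (T : finType) (e : rel T) : {set T} :=
  [set v | [exists u, exists w,
     (u != w) && (closed_nbhd e u :&: closed_nbhd e w == [set v])]].

Definition C_set (T : finType) (e : rel T) : {set T} :=
  [set v | `[< forall X : {set T}, mu_t_set e X -> v \in X >]].

(* Main.v *)
Require Import Defs.
From mathcomp Require Import all_boot.
From mathcomp Require Import boolp.
From mathcomp Require Import zify.

Section G.
Variables (T : finType) (e : rel T).

Lemma shortcut a b p1 c w p3 :
  shortest_path e a b (p1 ++ c :: w :: p3) ->
  (last a p1 != w) /\ ~~ e (last a p1) w.
Proof.
move=> [[Hp Hl] Hmin].
move: Hp; rewrite cat_path /= => /andP [Hp1 /and3P [Huc Hcw Hp3]].
move: Hl; rewrite last_cat /= => Hl.
split.
- apply/negP => /eqP Hu.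
  have W : walk e a b (p1 ++ p3).
    split; first by rewrite cat_path Hp1 Hu.
    by rewrite last_cat Hu.
  have := Hmin _ W; rewrite !size_cat /=; lia.
- apply/negP => Huw.
  have W : walk e a b (p1 ++ w :: p3).
    split; first by rewrite cat_path Hp1 /= Huw.
    by rewrite last_cat.
  have := Hmin _ W; rewrite !size_cat /=; lia.
Qed.

Lemma exists_shortest a b : connect e a b -> exists p, shortest_path e a b p.
Proof.
move/connectP=> [p Hp Hl].
suff H: forall n q, size q <= n -> walk e a b q -> exists q, shortest_path e a b q.
  by apply: (H (size p) p) => //; split.
elim=> [|n IH] q Hq Hw.
- exists q; split => // r _; move: Hq; rewrite leqn0 => /eqP ->; done.
- case: (pselect (exists r, walk e a b r /\ size r < size q)) => [[r [Hr Hlt]]|H].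
  + by apply: (IH r) => //; lia.
  + exists q; split => // r Hr; rewrite leqNgt; apply/negP => Hlt; apply: H; by exists r.
Qed.

Arguments shortcut {a b p1 c w p3}.
Arguments exists_shortest {a b}.
Lemma internal_cons (z : T) (s : seq T) : internal (z :: s) = if s is [::] then [::] else z :: internal s.
Proof. by case: s. Qed.

Lemma split_internal (v : T) (p : seq T) : v \in internal p -> exists p1 w p3, p = p1 ++ v :: w :: p3.
Proof.
elim: p => [|y r IH] //.
rewrite internal_cons; case: r IH => [|z r'] // IH.
rewrite inE => /orP [/eqP ->|Hv].
- by exists [::], z, r'.
- have [p1 [w [p3 ->]]] := IH Hv.
  by exists (y :: p1), w, p3.
Qed.

Lemma internal_cat (p1 : seq T) (y w : T) p3 :
  internal (p1 ++ y :: w :: p3) = p1 ++ y :: internal (w :: p3).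
Proof.
elim: p1 => [|z p1 IH] /=; first by rewrite internal_cons.
by rewrite internal_cons; case: p1 IH => [|t p1] IH /=; rewrite IH.
Qed.

Arguments split_internal {v p}.
Arguments internal_cat {p1 y w p3}.
Hypothesis sym : symmetric e.
Hypothesis irr : irreflexive e.

Lemma internal_not_simplicial a b p v :
  shortest_path e a b p -> v \in internal p -> ~~ simplicial e v.
Proof.
move=> Hs /split_internal [p1 [w [p3 Ep]]]; subst p.
have [Hne Hnadj] := shortcut Hs.
move: Hs => [[Hp _] _].
move: Hp; rewrite cat_path /= => /andP [_ /and3P [Huv Hvw _]].
apply/negP => /forallP /(_ (last a p1)) /forallP /(_ w).
by rewrite sym Huv Hvw Hne /= (negbTE Hnadj).
Qed.

Arguments internal_not_simplicial {a b p v}.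
Lemma S_total : connected_graph e -> total_mv_set e (S_set e).
Proof.
move=> Hc a b; have [p Hp] := exists_shortest (Hc a b).
exists p; split => // v Hv; rewrite inE.
exact: internal_not_simplicial Hp Hv.
Qed.

Lemma P_not_in X v : total_mv_set e X -> v \in P_set e -> v \notin X.
Proof.
move=> HX; rewrite inE => /existsP [u /existsP [w /andP [Huw /eqP HN]]].
have Hv: v \in closed_nbhd e u :&: closed_nbhd e w by rewrite HN set11.
have Hmem: forall z, z \in closed_nbhd e u -> z \in closed_nbhd e w -> z = v.
  by move=> z H1 H2; apply/set1P; rewrite -HN inE H1 H2.
move: Hv; rewrite inE /closed_nbhd !inE => /andP [Hvu Hvw].
have Euw: ~~ e u w.
  apply/negP => H.
  have Ew : w = v by apply: Hmem; rewrite !inE ?H ?eqxx ?orbT.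
  have Eu : u = v by apply: Hmem; rewrite !inE ?eqxx //= sym H orbT.
  by rewrite Eu Ew eqxx in Huw.
have Euv: e u v.
  case/orP: Hvu => [/eqP Evu|//].
  by rewrite Evu (negbTE Huw) /= sym (negbTE Euw) in Hvw.
have Evw: e v w.
  case/orP: Hvw => [/eqP Evw|H]; last by rewrite sym.
  by rewrite Evw eq_sym (negbTE Huw) /= (negbTE Euw) in Hvu.
have [p [[[Hp Hl] Hmin] Hint]] := HX u w.
have W : walk e u w [:: v; w] by split; rewrite //= Euv Evw.
have Hsz := Hmin _ W.
case: p Hp Hl Hmin Hint Hsz => [|a [|a' [|? ?]]] //=.
- by move=> _ Euw'; rewrite Euw' eqxx in Huw.
- by rewrite andbT => H Ha; subst w; rewrite H in Euw.
- rewrite andbT => /andP [Hua Haa'] Ha' _ Hint _.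
  have Ea : a = v.
    apply: Hmem; rewrite !inE ?Hua ?orbT //.
    by rewrite -Ha' sym Haa' orbT.
  by apply: Hint; rewrite Ea /internal /= inE.
Qed.

Lemma add_x x : connected_graph e -> x \notin P_set e ->
  total_mv_set e (S_set e :|: [set x]).
Proof.
move=> Hc HxP a b.
have [p Hp] := exists_shortest (Hc a b).
suff [q [Hq Hx]] : exists q, shortest_path e a b q /\ x \notin internal q.
  exists q; split => // v Hv; rewrite !inE negb_or.
  rewrite (internal_not_simplicial Hq Hv) /=.
  by apply/eqP => Evx; subst v; rewrite Hv in Hx.
suff H: forall n q, count_mem x (internal q) <= n -> shortest_path e a b q ->
   exists q, shortest_path e a b q /\ x \notin internal q.
  exact: (H _ p (leqnn _) Hp).
elim=> [|n IH] q Hn Hq.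
- exists q; split => //; by rewrite -has_pred1 has_count -leqNgt.
- case Hxi: (x \in internal q); last by exists q; rewrite Hxi.
  have [p1 [w [p3 Eq]]] := split_internal Hxi; subst q.
  have [Hne Hnadj] := shortcut Hq.
  have Hq' := Hq; move: Hq' => [[Hp' Hl] Hmin].
  move: Hp'; rewrite cat_path /= => /andP [Hp1 /and3P [Hux Hxw Hp3]].
  move: HxP; rewrite inE negb_exists => /forallP /(_ (last a p1)).
  rewrite negb_exists => /forallP /(_ w); rewrite Hne /= => HN.
  have [x' [Hx'in Hx'x]] : exists x', x' \in closed_nbhd e (last a p1) :&: closed_nbhd e w /\ x' != x.
    case: (pselect (exists x', x' \in closed_nbhd e (last a p1) :&: closed_nbhd e w /\ x' != x)) => // Hno.
    exfalso; move/negP: HN; apply; apply/eqP/setP => z; rewrite [RHS]inE.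
    apply/idP/idP.
    + move=> Hz; apply/negPn/negP => Hzx; apply: Hno; by exists z.
    + by move/eqP ->; rewrite !inE Hux sym Hxw !orbT.
  move: Hx'in; rewrite !inE => /andP [Hu' Hw'].
  have Eux': e (last a p1) x'.
    case/orP: Hu' => [/eqP Ex'|//].
    by rewrite Ex' (negbTE Hne) /= sym (negbTE Hnadj) in Hw'.
  have Ex'w: e x' w.
    case/orP: Hw' => [/eqP Ex'|H]; last by rewrite sym.
    by rewrite Ex' eq_sym (negbTE Hne) /= (negbTE Hnadj) in Hu'.
  apply: (IH (p1 ++ x' :: w :: p3)).
  + move: Hn; rewrite !internal_cat !count_cat /= eqxx (negbTE Hx'x); lia.
  + split; [split|].
    * by rewrite cat_path Hp1 /= Eux' Ex'w Hp3.
    * by move: Hl; rewrite !last_cat.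
    * move=> r Hr; have := Hmin r Hr; by rewrite !size_cat.
Qed.

End G.

Theorem proposition3p3 (T : finType) (e : rel T) (m : nat) :
  simple_graph e -> connected_graph e -> is_mu_t e m ->
  [/\ #|S_set e| <= m,
      m = #|S_set e| -> m = #|T| - #|P_set e|
    & m = #|T| - #|P_set e| -> m = #|C_set e| ].
Proof.
move=> [sym irr] Hc [[X0 [HX0 HX0c]] Hmax].
have HS := S_total _ _ sym Hc.
have HP: forall X, total_mv_set e X -> X \subset ~: P_set e.
  move=> X HX; apply/subsetP => v Hv; rewrite inE; apply/negP => HvP.
  by have := P_not_in _ _ sym _ _ HX HvP; rewrite Hv.
have cardC: #|~: P_set e| = #|T| - #|P_set e| by rewrite [LHS]cardsCs setCK.
split.
- exact: Hmax _ HS.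
- move=> Hm.
  have ESP: S_set e = ~: P_set e.
    apply/setP => v; rewrite [RHS]inE; case HvP: (v \in P_set e) => /=.
    + apply/negP => HvS; by have := P_not_in _ _ sym _ _ HS HvP; rewrite HvS.
    + apply/negPn/negP => HvS.
      have := Hmax _ (add_x _ _ sym _ Hc (negbT HvP)).
      rewrite setUC cardsU1 HvS -Hm /=; lia.
  by rewrite -cardC -ESP.
- move=> Hm.
  have EX0: X0 = ~: P_set e.
    by apply/eqP; rewrite eqEcard HP //= cardC HX0c -Hm.
  have EC: C_set e = ~: P_set e.
    apply/setP => v; rewrite /C_set inE [RHS]inE; apply/asboolP/idP.
    + move=> H; have: v \in X0.
        by apply: H; split => // Y HY; rewrite HX0c; exact: Hmax.
      by rewrite EX0 inE.
    + move=> HvP X [HX HXm].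
      have -> : X = ~: P_set e.
        by apply/eqP; rewrite eqEcard HP //= cardC -Hm -HX0c; exact: HXm.
      by rewrite inE.
  by rewrite EC cardC.
Qed.
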